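(* Let $(a_k)_{k\geqslant1}$ be a sequence of complex numbers and $S(x)=\sum_{k\leqslant x}a_k\left[\frac{x}{k}\right]\log k$. Suppose that for every $v>1$, $\lim_{k\to\infty}|S(k)|/k^{v}=0$. Then the series $\sum_{m=1}^\infty a_m m^{-v}$ converges for every $v>1$.
   Context: $[x]$ denotes the integer part of a real number $x$. *)

(* Defs.v *)
From Stdlib Require Import Reals.
From Coquelicot Require Import Coquelicot.

(* The sequence (a_k)_{k>=1} is modelled by a : nat -> C; the value a 0 is
   never used. *)
Definition Ssum (a : nat -> C) (n : nat) : C :=
  sum_n_m (fun k => Cmult (a k) (RtoC (INR (Nat.div n k) * ln (INR k)))) 1 n.

(* Main.v *)
Require Import Defs.
From Stdlib Require Import Reals Lra Lia List Arith.
From Coquelicot Require Import Coquelicot.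
Open Scope R_scope.

Fixpoint sm (f : nat -> R) (n : nat) : R :=
  match n with O => 0 | S n' => sm f n' + f (S n') end.

Lemma sm_ext f g n : (forall k, (1 <= k <= n)%nat -> f k = g k) -> sm f n = sm g n.
Proof.
  induction n; intros H; simpl; auto.
  rewrite IHn by (intros; apply H; lia). rewrite H by lia. reflexivity.
Qed.

Lemma sm_le f g n : (forall k, (1 <= k <= n)%nat -> f k <= g k) -> sm f n <= sm g n.
Proof.
  induction n; intros H; simpl; try lra.
  assert (sm f n <= sm g n) by (apply IHn; intros; apply H; lia).
  assert (f (S n) <= g (S n)) by (apply H; lia). lra.
Qed.

Lemma sm_plus f g n : sm (fun k => f k + g k) n = sm f n + sm g n.
Proof. induction n; simpl; [lra|]. rewrite IHn; ring. Qed.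

Lemma sm_minus f g n : sm (fun k => f k - g k) n = sm f n - sm g n.
Proof. induction n; simpl; [lra|]. rewrite IHn; ring. Qed.

Lemma sm_scal c f n : sm (fun k => c * f k) n = c * sm f n.
Proof. induction n; simpl; [lra|]. rewrite IHn; ring. Qed.

Lemma sm_abs f n : Rabs (sm f n) <= sm (fun k => Rabs (f k)) n.
Proof.
  induction n; simpl. rewrite Rabs_R0; lra.
  eapply Rle_trans. apply Rabs_triang. lra.
Qed.

Lemma sm_swap (F : nat -> nat -> R) m n :
  sm (fun i => sm (fun j => F i j) n) m = sm (fun j => sm (fun i => F i j) m) n.
Proof.
  induction m; simpl.
  - induction n; simpl; lra.
  - rewrite IHm. rewrite <- sm_plus. reflexivity.
Qed.

Lemma sm_cut f N n : (N <= n)%nat ->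
  sm (fun k => if Nat.leb k N then f k else 0) n = sm f N.
Proof.
  induction n; intros H.
  - replace N with 0%nat by lia. reflexivity.
  - destruct (Nat.eq_dec N (S n)) as [->|Hne].
    + simpl sm. rewrite Nat.leb_refl.
      rewrite (sm_ext _ f) by (intros k Hk; destruct (Nat.leb_spec k (S n)); [reflexivity|lia]).
      reflexivity.
    + change (sm (fun k => if Nat.leb k N then f k else 0) (S n)) with
        (sm (fun k => if Nat.leb k N then f k else 0) n + (if Nat.leb (S n) N then f (S n) else 0)).
      rewrite IHn by lia. destruct (Nat.leb_spec (S n) N); [lia|]. lra.
Qed.

Lemma sm_const1 n : sm (fun _ => 1) n = INR n.
Proof. induction n; simpl sm; [simpl; lra|]. rewrite IHn, S_INR; lra. Qed.

Lemma sm_first f n : (1 <= n)%nat ->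
  sm f n = f 1%nat + sm (fun l => if Nat.ltb 1 l then f l else 0) n.
Proof.
  induction n; intros H; [lia|].
  destruct n. simpl. lra.
  change (sm f (S (S n))) with (sm f (S n) + f (S (S n))).
  change (sm (fun l => if Nat.ltb 1 l then f l else 0) (S (S n))) with
    (sm (fun l => if Nat.ltb 1 l then f l else 0) (S n) + (if Nat.ltb 1 (S (S n)) then f (S (S n)) else 0)).
  rewrite IHn by lia. replace (Nat.ltb 1 (S (S n))) with true by reflexivity. ring.
Qed.

Lemma divS n q : (1 <= q)%nat ->
  (S n / q = n / q + (if Nat.eqb (S n mod q) 0 then 1 else 0))%nat.
Proof.
  intros Hq.
  pose proof (Nat.div_mod_eq (S n) q). pose proof (Nat.div_mod_eq n q).
  pose proof (Nat.mod_upper_bound (S n) q ltac:(lia)).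
  pose proof (Nat.mod_upper_bound n q ltac:(lia)).
  destruct (Nat.eqb_spec (S n mod q) 0); nia.
Qed.

Lemma sm_reindex (G : nat -> R) q n : (1 <= q)%nat ->
  sm (fun l => G (q * l)%nat) (n / q) = sm (fun l => if Nat.eqb (l mod q) 0 then G l else 0) n.
Proof.
  intros Hq. induction n.
  - rewrite Nat.Div0.div_0_l. reflexivity.
  - rewrite divS by lia. simpl sm at 2. rewrite <- IHn.
    destruct (Nat.eqb_spec (S n mod q) 0) as [E|E].
    + rewrite Nat.add_1_r. simpl sm. f_equal.
      pose proof (Nat.div_mod_eq (S n) q). rewrite divS in H by lia.
      rewrite E in H. simpl in H. f_equal. lia.
    + rewrite Nat.add_0_r. lra.
Qed.

Definition bb (a : nat -> R) k := a k * ln (INR k).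
Definition BB a n := sm (bb a) n.
Definition SR (a : nat -> R) n := sm (fun k => a k * (INR (n / k) * ln (INR k))) n.

Lemma mul_le_div k l n : (1 <= l)%nat -> ((k * l <=? n) = (k <=? n / l))%nat.
Proof.
  intros Hl. destruct (Nat.leb_spec (k*l) n); destruct (Nat.leb_spec k (n/l)); auto.
  - exfalso. pose proof (Nat.div_le_lower_bound n l k ltac:(lia) ltac:(lia)). lia.
  - exfalso. pose proof (Nat.mul_div_le n l ltac:(lia)).
    assert (k * l <= (n/l) * l)%nat by (apply Nat.mul_le_mono_r; lia). lia.
Qed.

Lemma INR_div_count k n : (1 <= k)%nat ->
  INR (n / k) = sm (fun l => if (k * l <=? n)%nat then 1 else 0) n.
Proof.
  intros Hk.
  rewrite (sm_ext _ (fun l => if (l <=? n / k)%nat then 1 else 0)).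
  2:{ intros l Hl. rewrite Nat.mul_comm, mul_le_div by lia. reflexivity. }
  rewrite sm_cut. symmetry; apply sm_const1. apply Nat.Div0.div_le_upper_bound. nia.
Qed.

Lemma SR_B a n : SR a n = sm (fun l => BB a (n / l)) n.
Proof.
  unfold SR.
  rewrite (sm_ext _ (fun k => sm (fun l => if (k * l <=? n)%nat then bb a k else 0) n)).
  2:{ intros k Hk. rewrite INR_div_count by lia.
      transitivity (bb a k * sm (fun l => if (k * l <=? n)%nat then 1 else 0) n).
      unfold bb; ring. rewrite <- sm_scal.
      apply sm_ext. intros l Hl. destruct (k * l <=? n)%nat; ring. }
  rewrite sm_swap. apply sm_ext. intros l Hl.
  unfold BB. rewrite <- (sm_cut (bb a) (n / l) n).
  apply sm_ext. intros k Hk. rewrite mul_le_div by lia. reflexivity.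
  apply Nat.Div0.div_le_upper_bound. nia.
Qed.

Definition rough (q l : nat) : bool :=
  forallb (fun d => negb (Nat.eqb (l mod d) 0)) (seq 2 (q - 1)).
Definition ee q l := if rough q l then 1 else 0.
Definition Phi a q n := sm (fun l => ee q l * BB a (n / l)) n.

Lemma rough_S q l : (1 <= q)%nat ->
  rough (S q) l = (rough q l && negb (Nat.eqb (l mod (S q)) 0))%bool.
Proof.
  intros Hq. unfold rough. replace (S q - 1)%nat with (S (q - 1)) by lia.
  rewrite seq_S, forallb_app. replace (2 + (q - 1))%nat with (S q) by lia.
  cbn [forallb]. rewrite Bool.andb_true_r. reflexivity.
Qed.

Lemma rough_spec q l : rough q l = true <-> forall d, (2 <= d <= q)%nat -> l mod d <> 0%nat.
Proof.
  unfold rough. rewrite forallb_forall. split.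
  - intros H d Hd. specialize (H d). rewrite in_seq in H.
    assert (negb (l mod d =? 0)%nat = true) by (apply H; lia).
    apply Bool.negb_true_iff in H0. apply Nat.eqb_neq in H0. exact H0.
  - intros H d Hd. rewrite in_seq in Hd. apply Bool.negb_true_iff, Nat.eqb_neq, H. lia.
Qed.

Lemma Phi_1 a n : Phi a 1 n = SR a n.
Proof.
  rewrite SR_B. unfold Phi. apply sm_ext. intros. unfold ee, rough. simpl. ring.
Qed.

Lemma divides_mod d q l : (1 <= d)%nat -> (1 <= q)%nat -> q mod d = 0%nat -> l mod q = 0%nat -> l mod d = 0%nat.
Proof.
  intros Hd Hq H1 H2.
  apply Nat.Lcm0.mod_divide in H1. apply Nat.Lcm0.mod_divide in H2.
  apply Nat.Lcm0.mod_divide. eapply Nat.divide_trans; eauto.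
Qed.

Lemma Phi_comp a q n : (2 <= q)%nat -> rough (q - 1) q = false -> Phi a q n = Phi a (q - 1) n.
Proof.
  intros Hq Hr. unfold Phi. apply sm_ext. intros l Hl. f_equal. unfold ee.
  replace q with (S (q - 1)) at 1 by lia. rewrite rough_S by lia.
  replace (S (q - 1)) with q by lia.
  destruct (rough (q - 1) l) eqn:E; simpl; auto.
  destruct (Nat.eqb_spec (l mod q) 0); simpl; auto.
  exfalso.
  assert (~ (forall d, (2 <= d <= q - 1)%nat -> q mod d <> 0%nat)).
  { intro H. apply rough_spec in H. congruence. }
  apply H. intros d Hd Hqd.
  rewrite rough_spec in E. apply (E d Hd). apply (divides_mod d q l); try lia; assumption.
Qed.

Lemma gauss_rough q l : (2 <= q)%nat -> rough (q - 1) q = true -> l mod q = 0%nat ->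
  rough (q - 1) (l / q) = rough (q - 1) l.
Proof.
  intros Hq Hr Hl. rewrite rough_spec in Hr.
  apply Bool.eq_true_iff_eq. rewrite !rough_spec.
  assert (Hlq : l = (q * (l / q))%nat).
  { pose proof (Nat.div_mod_eq l q). lia. }
  split; intros H d Hd Hmod; apply (H d Hd).
  - apply Nat.Lcm0.mod_divide in Hmod. apply Nat.Lcm0.mod_divide.
    assert (Hm2 : Nat.divide d (q * (l / q))) by (rewrite <- Hlq; exact Hmod).
    apply (Nat.gauss d q (l / q)). exact Hm2.
    destruct (Nat.eq_dec (Nat.gcd d q) 1) as [|Hg]; auto. exfalso.
    pose proof (Nat.gcd_divide_l d q). pose proof (Nat.gcd_divide_r d q).
    assert (Nat.gcd d q <> 0%nat).
    { intro E. apply Nat.gcd_eq_0 in E. lia. }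
    pose proof (Nat.divide_pos_le (Nat.gcd d q) d ltac:(lia) H0).
    apply (Hr (Nat.gcd d q)). lia. apply Nat.Lcm0.mod_divide. exact H1.
  - apply Nat.Lcm0.mod_divide in Hmod. apply Nat.Lcm0.mod_divide.
    rewrite Hlq. apply Nat.divide_mul_r. exact Hmod.
Qed.

Lemma Phi_prime a q n : (2 <= q)%nat -> rough (q - 1) q = true ->
  Phi a q n = Phi a (q - 1) n - Phi a (q - 1) (n / q).
Proof.
  intros Hq Hr. unfold Phi at 3.
  rewrite (sm_ext (fun l => ee (q - 1) l * BB a (n / q / l))
                  (fun l => (fun l' => ee (q-1) (l' / q) * BB a (n / l')) (q * l)%nat)).
  2:{ intros l Hl. cbv beta. rewrite Nat.Div0.div_div. f_equal. f_equal.
      rewrite Nat.mul_comm, Nat.div_mul by lia. reflexivity. }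
  rewrite (sm_reindex (fun l' => ee (q-1) (l' / q) * BB a (n / l')) q n) by lia.
  unfold Phi. rewrite <- sm_minus. apply sm_ext.
  intros l Hl. unfold ee.
  replace q with (S (q - 1)) at 1 by lia. rewrite rough_S by lia.
  replace (S (q - 1)) with q by lia.
  destruct (Nat.eqb_spec (l mod q) 0) as [E|E].
  - rewrite gauss_rough by auto. rewrite Bool.andb_false_r. ring.
  - rewrite Bool.andb_true_r. ring.
Qed.

Lemma Phi_bound a M n : (forall x, (x <= n)%nat -> Rabs (SR a x) <= M) ->
  forall q x, (1 <= q)%nat -> (x <= n)%nat -> Rabs (Phi a q x) <= 2 ^ q * M.
Proof.
  intros HM q. induction q; intros x Hq Hx; [lia|].
  assert (0 <= M) by (eapply Rle_trans; [apply Rabs_pos| apply (HM 0%nat); lia]).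
  destruct q.
  - rewrite Phi_1. simpl. specialize (HM x Hx). lra.
  - destruct (rough (S (S q) - 1) (S (S q))) eqn:E.
    + replace (S (S q)) with (S (S q)) by reflexivity.
      rewrite Phi_prime by first [lia | exact E]. replace (S (S q) - 1)%nat with (S q) by lia.
      unfold Rminus; eapply Rle_trans; [apply Rabs_triang|]; rewrite Rabs_Ropp.
      assert (Rabs (Phi a (S q) x) <= 2 ^ S q * M) by (apply IHq; lia).
      assert (Rabs (Phi a (S q) (x / S (S q))) <= 2 ^ S q * M).
      { apply IHq. lia. eapply Nat.le_trans; [apply Nat.Div0.div_le_upper_bound|]; [|exact Hx]. nia. }
      change (2 ^ S (S q)) with (2 * 2 ^ S q). lra.
    + rewrite Phi_comp by first [lia | exact E]. replace (S (S q) - 1)%nat with (S q) by lia.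
      assert (Rabs (Phi a (S q) x) <= 2 ^ S q * M) by (apply IHq; lia).
      assert (0 <= 2 ^ S q * M) by (apply Rmult_le_pos; auto; apply pow_le; lra).
      change (2 ^ S (S q)) with (2 * 2 ^ S q). lra.
Qed.

Lemma exp_le x y : x <= y -> exp x <= exp y.
Proof. intros H. destruct (Rle_lt_or_eq_dec _ _ H). left; apply exp_increasing; auto. subst; lra. Qed.

Lemma rpow_pos x y : 0 < Rpower x y.
Proof. unfold Rpower. apply exp_pos. Qed.

Lemma rpow_mono_neg e x y : e <= 0 -> 0 < x <= y -> Rpower y e <= Rpower x e.
Proof.
  intros He Hxy. unfold Rpower. apply exp_le.
  assert (ln x <= ln y) by (apply ln_le; lra). nra.
Qed.

Lemma rpow_mono_pos e x y : 0 <= e -> 0 < x <= y -> Rpower x e <= Rpower y e.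
Proof.
  intros He Hxy. unfold Rpower. apply exp_le.
  assert (ln x <= ln y) by (apply ln_le; lra). nra.
Qed.

Lemma rpow_div x y w : 0 < x -> 0 < y -> Rpower (x / y) w = Rpower x w * Rpower y (- w).
Proof.
  intros. unfold Rpower. rewrite ln_div by auto. rewrite <- exp_plus. f_equal. ring.
Qed.

Lemma T1 d x : 0 < d -> 0 < x ->
  d * Rpower (x + 1) (- (1 + d)) <= Rpower x (- d) - Rpower (x + 1) (- d) <= d * Rpower x (- (1 + d)).
Proof.
  intros Hd Hx.
  destruct (MVT_cor2 (fun y => Rpower y (- d)) (fun y => - d * Rpower y (- d - 1)) x (x + 1))
    as [c [Hc1 Hc2]]; [lra| |].
  { intros c Hc. apply derivable_pt_lim_power. lra. }
  replace (- (1 + d)) with (- d - 1) by ring.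
  assert (E : Rpower x (- d) - Rpower (x + 1) (- d) = d * Rpower c (- d - 1)).
  { replace (x + 1 - x) with 1 in Hc1 by ring. lra. }
  rewrite E.
  pose proof (rpow_mono_neg (- d - 1) x c ltac:(lra) ltac:(lra)).
  pose proof (rpow_mono_neg (- d - 1) c (x + 1) ltac:(lra) ltac:(lra)).
  split; apply Rmult_le_compat_l; lra.
Qed.

Lemma exists_nat_ge r : exists N : nat, (1 <= N)%nat /\ r <= INR N.
Proof.
  destruct (Rle_lt_dec r 1).
  - exists 1%nat. simpl. split; auto; lra.
  - destruct (archimed_cor1 (/ r)) as [N [H1 H2]]. apply Rinv_0_lt_compat; lra.
    exists N. split. lia.
    assert (0 < INR N) by (apply lt_0_INR; lia).
    assert (/ INR N * r < / r * r) by (apply Rmult_lt_compat_r; lra).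
    rewrite Rinv_l in H0 by lra.
    apply Rmult_lt_compat_l with (r := INR N) in H0; auto.
    rewrite <- Rmult_assoc, Rinv_r, Rmult_1_l, Rmult_1_r in H0 by lra. lra.
Qed.

Lemma tail w : 1 < w -> exists P, (1 <= P)%nat /\
  forall n, sm (fun l => if (P <? l)%nat then Rpower (INR l) (- w) else 0) n <= / 2.
Proof.
  intros Hw. set (d := w - 1).
  assert (Hd : 0 < d) by (unfold d; lra).
  destruct (exists_nat_ge (exp (ln (2 / d) / d))) as [P [HP1 HP2]].
  exists P. split; auto.
  assert (HP0 : 0 < INR P) by (apply lt_0_INR; lia).
  assert (Htel : forall n, sm (fun l => if (P <? l)%nat then Rpower (INR l) (- w) else 0) n
                   <= (Rpower (INR P) (- d) - Rpower (INR (Nat.max P n)) (- d)) / d).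
  { induction n.
    - simpl. rewrite Nat.max_0_r. unfold Rdiv. rewrite Rminus_diag. lra.
    - change (sm (fun l => if (P <? l)%nat then Rpower (INR l) (- w) else 0) (S n)) with
        (sm (fun l => if (P <? l)%nat then Rpower (INR l) (- w) else 0) n +
         (if (P <? S n)%nat then Rpower (INR (S n)) (- w) else 0)).
      destruct (Nat.ltb_spec P (S n)).
      + rewrite Nat.max_r in IHn by lia. rewrite Nat.max_r by lia.
        assert (0 < INR n) by (apply lt_0_INR; lia).
        pose proof (T1 d (INR n) Hd H0) as [T _].
        rewrite S_INR. replace (Rpower (INR n + 1) (- w)) with (Rpower (INR n + 1) (- (1 + d))) by (unfold d; f_equal; ring).
        apply Rmult_le_reg_l with d; auto.
        unfold Rdiv in *.
        replace (d * ((Rpower (INR P) (- d) - Rpower (INR n + 1) (- d)) * / d)) with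
          (Rpower (INR P) (- d) - Rpower (INR n + 1) (- d)) by (field; lra).
        apply Rmult_le_compat_l with (r := d) in IHn; [|lra].
        replace (d * ((Rpower (INR P) (- d) - Rpower (INR n) (- d)) * / d)) with
          (Rpower (INR P) (- d) - Rpower (INR n) (- d)) in IHn by (field; lra).
        rewrite Rmult_plus_distr_l. lra.
      + rewrite Nat.max_l in IHn by lia. rewrite Nat.max_l by lia. lra. }
  intros n. eapply Rle_trans; [apply Htel|].
  pose proof (rpow_pos (INR (Nat.max P n)) (- d)).
  assert (Rpower (INR P) (- d) <= d / 2).
  { unfold Rpower. replace (d / 2) with (exp (ln (d / 2))) by (apply exp_ln; lra).
    apply exp_le.
    assert (H1 : ln (2 / d) / d <= ln (INR P)).
    { rewrite <- (ln_exp (ln (2 / d) / d)). apply ln_le; auto. apply exp_pos. }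
    assert (H2 : ln (d / 2) = - ln (2 / d)).
    { replace (d / 2) with (/ (2 / d)) by (field; lra). apply ln_Rinv.
      apply Rdiv_lt_0_compat; lra. }
    rewrite H2.
    apply Rmult_le_compat_l with (r := d) in H1; [|lra].
    replace (d * (ln (2 / d) / d)) with (ln (2 / d)) in H1 by (field; lra). lra. }
  apply Rmult_le_reg_l with d; auto. unfold Rdiv.
  replace (d * ((Rpower (INR P) (- d) - Rpower (INR (Nat.max P n)) (- d)) * / d)) with
    (Rpower (INR P) (- d) - Rpower (INR (Nat.max P n)) (- d)) by (field; lra).
  unfold Rdiv in H0. lra.
Qed.

Lemma ee_1 P : ee P 1 = 1.
Proof.
  unfold ee. destruct (rough P 1) eqn:E; auto. exfalso.
  assert (rough P 1 = true); [|congruence].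
  apply rough_spec. intros d Hd. rewrite Nat.mod_small by lia. lia.
Qed.

Lemma ee_small P l : (2 <= l <= P)%nat -> ee P l = 0.
Proof.
  intros H. unfold ee. destruct (rough P l) eqn:E; auto.
  rewrite rough_spec in E. exfalso. apply (E l H). apply Nat.Div0.mod_same.
Qed.

Lemma ee_abs P l : Rabs (ee P l) <= 1.
Proof. unfold ee. destruct (rough P l); rewrite ?Rabs_R1, ?Rabs_R0; lra. Qed.

Lemma B_decomp a P n : (1 <= n)%nat ->
  Rabs (BB a n) <= Rabs (Phi a P n) + sm (fun l => if (P <? l)%nat then Rabs (BB a (n / l)) else 0) n.
Proof.
  intros Hn. unfold Phi. rewrite sm_first by auto. rewrite ee_1, Nat.div_1_r, Rmult_1_l.
  set (X := sm _ n).
  assert (Rabs X <= sm (fun l => if (P <? l)%nat then Rabs (BB a (n / l)) else 0) n).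
  { eapply Rle_trans. apply sm_abs. apply sm_le. intros l Hl.
    destruct (Nat.ltb_spec 1 l); [|rewrite Rabs_R0; destruct (P <? l)%nat; [apply Rabs_pos|lra]].
    destruct (Nat.ltb_spec P l).
    - rewrite Rabs_mult. pose proof (ee_abs P l). pose proof (Rabs_pos (BB a (n / l))).
      pose proof (Rabs_pos (ee P l)). nra.
    - rewrite ee_small by lia. rewrite Rmult_0_l, Rabs_R0. lra. }
  assert (Rabs (BB a n) <= Rabs (BB a n + X) + Rabs X).
  { replace (BB a n) with ((BB a n + X) + - X) at 1 by ring.
    eapply Rle_trans; [apply Rabs_triang|]. rewrite Rabs_Ropp. lra. }
  lra.
Qed.

Lemma B_bound a w C : 1 < w -> 0 <= C ->
  (forall x, (1 <= x)%nat -> Rabs (SR a x) <= C * Rpower (INR x) w) ->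
  exists K, 0 <= K /\ forall n, (1 <= n)%nat -> Rabs (BB a n) <= K * Rpower (INR n) w.
Proof.
  intros Hw HC HS.
  destruct (tail w Hw) as [P [HP1 HP2]].
  assert (H2P : 0 < 2 ^ P) by (apply pow_lt; lra).
  exists (2 * 2 ^ P * C). split. { apply Rmult_le_pos; [|auto]. lra. }
  intros n. induction n as [n IH] using lt_wf_ind. intros Hn.
  assert (Hn0 : 0 < INR n) by (apply lt_0_INR; lia).
  assert (HM : forall x, (x <= n)%nat -> Rabs (SR a x) <= C * Rpower (INR n) w).
  { intros x Hx. destruct x.
    - unfold SR. simpl. rewrite Rabs_R0. apply Rmult_le_pos; auto. left; apply rpow_pos.
    - eapply Rle_trans. apply HS. lia. apply Rmult_le_compat_l; auto.
      apply rpow_mono_pos. lra. split. apply lt_0_INR; lia. apply le_INR; auto. }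
  pose proof (Phi_bound a _ n HM P n HP1 (Nat.le_refl n)) as HPhi.
  pose proof (B_decomp a P n Hn) as HD.
  set (K := 2 * 2 ^ P * C) in *.
  assert (HK : 0 <= K) by (unfold K; apply Rmult_le_pos; [|auto]; lra).
  assert (Hsum : sm (fun l => if (P <? l)%nat then Rabs (BB a (n / l)) else 0) n <=
                 K * Rpower (INR n) w * / 2).
  { eapply Rle_trans.
    2:{ apply Rmult_le_compat_l. apply Rmult_le_pos; auto. left; apply rpow_pos. apply (HP2 n). }
    rewrite <- sm_scal. apply sm_le. intros l Hl.
    destruct (Nat.ltb_spec P l); [|lra].
    assert (Hl0 : 0 < INR l) by (apply lt_0_INR; lia).
    destruct (Nat.eq_dec (n / l) 0) as [E|E].
    - rewrite E. unfold BB. simpl. rewrite Rabs_R0.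
      apply Rmult_le_pos. apply Rmult_le_pos; auto. left; apply rpow_pos. left; apply rpow_pos.
    - assert (n / l < n)%nat by (apply Nat.div_lt; lia).
      eapply Rle_trans. apply IH; auto. lia.
      rewrite Rmult_assoc. apply Rmult_le_compat_l; auto.
      rewrite <- rpow_div by auto.
      apply rpow_mono_pos. lra. split. apply lt_0_INR; lia.
      apply Rmult_le_reg_r with (INR l); auto. unfold Rdiv.
      rewrite Rmult_assoc, Rinv_l, Rmult_1_r by lra.
      rewrite <- mult_INR. apply le_INR. rewrite Nat.mul_comm. apply Nat.Div0.mul_div_le. }
  assert (Rabs (Phi a P n) <= 2 ^ P * (C * Rpower (INR n) w)) by exact HPhi.
  assert (2 ^ P * (C * Rpower (INR n) w) = K * Rpower (INR n) w * / 2) by (unfold K; field).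
  lra.
Qed.

Lemma tele (h : nat -> R) c : is_lim_seq h 0 -> ex_series (fun k => c * (h k - h (S k))).
Proof.
  intros H. exists (c * h 0%nat).
  assert (Hs : forall N, sum_n (fun k => c * (h k - h (S k))) N = c * (h 0%nat - h (S N))).
  { intros N. rewrite sum_n_Reals. induction N; simpl; auto. rewrite IHN. ring. }
  apply is_lim_seq_spec in H.
  assert (Hl : is_lim_seq (sum_n (fun k => c * (h k - h (S k)))) (c * h 0%nat)).
  { apply is_lim_seq_spec. intros eps.
    assert (He : 0 < eps / (Rabs c + 1)).
    { apply Rdiv_lt_0_compat. apply cond_pos. pose proof (Rabs_pos c); lra. }
    destruct (H (mkposreal _ He)) as [N HN]. exists N. intros n Hn.
    rewrite Hs. replace (c * (h 0%nat - h (S n)) - c * h 0%nat) with (- (c * (h (S n) - 0))) by ring.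
    rewrite Rabs_Ropp, Rabs_mult.
    specialize (HN (S n) ltac:(lia)). simpl in HN.
    pose proof (Rabs_pos c). pose proof (Rabs_pos (h (S n) - 0)).
    apply Rle_lt_trans with ((Rabs c + 1) * Rabs (h (S n) - 0)). nra.
    apply Rmult_lt_compat_l with (r := Rabs c + 1) in HN; [|lra].
    replace ((Rabs c + 1) * (eps / (Rabs c + 1))) with (pos eps) in HN by (field; lra). exact HN. }
  exact Hl.
Qed.

Lemma squeeze0 (u r : nat -> R) M : (forall k, Rabs (u k) <= M * r k) -> is_lim_seq r 0 -> is_lim_seq u 0.
Proof.
  intros Hb H. apply is_lim_seq_spec in H. apply is_lim_seq_spec. intros eps.
  set (M' := Rabs M + 1).
  assert (HM : 0 < M') by (unfold M'; pose proof (Rabs_pos M); lra).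
  destruct (H (mkposreal (eps / M') (Rdiv_lt_0_compat _ _ (cond_pos eps) HM))) as [N HN].
  exists N. intros n Hn. specialize (HN n Hn). simpl in HN. rewrite Rminus_0_r in *.
  specialize (Hb n).
  assert (M * r n <= M' * Rabs (r n)).
  { unfold M'. pose proof (Rle_abs (M * r n)). rewrite Rabs_mult in H0.
    pose proof (Rabs_pos M). pose proof (Rabs_pos (r n)). nra. }
  apply Rmult_lt_compat_l with (r := M') in HN; auto.
  replace (M' * (eps / M')) with (pos eps) in HN by (field; lra). lra.
Qed.

Lemma lim_rpow d : 0 < d -> is_lim_seq (fun k => Rpower (INR (S k)) (- d)) 0.
Proof.
  intros Hd. apply is_lim_seq_spec. intros eps.
  set (t := - ln eps / d).
  destruct (exists_nat_ge (exp t)) as [N [_ HN]].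
  exists N. intros n Hn. rewrite Rminus_0_r, Rabs_pos_eq by (left; apply rpow_pos).
  assert (INR N < INR (S n)) by (apply lt_INR; lia).
  assert (t < ln (INR (S n))).
  { rewrite <- (ln_exp t). apply ln_increasing. apply exp_pos. lra. }
  unfold Rpower. replace (pos eps) with (exp (ln eps)) by (apply exp_ln, cond_pos).
  apply exp_increasing.
  apply Rmult_lt_compat_l with (r := d) in H0; auto.
  unfold t in H0. replace (d * (- ln eps / d)) with (- ln eps) in H0 by (field; lra). lra.
Qed.

Lemma ln1p_le u : 0 < u -> ln (1 + u) <= u.
Proof.
  intros. rewrite <- (ln_exp u) at 2. apply ln_le. lra. apply exp_ineq1_le.
Qed.

Definition phi s x := Rpower x (- s) / ln x.

Lemma ln2_pos : 0 < ln 2.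
Proof. rewrite <- ln_1. apply ln_increasing; lra. Qed.

Lemma frac_le a b c d : 0 <= a <= b -> 0 < c <= d -> a / d <= b / c.
Proof.
  intros. unfold Rdiv. apply Rmult_le_compat; try lra.
  left; apply Rinv_0_lt_compat; lra. apply Rinv_le_contravar; lra.
Qed.

Lemma phi_diff s x : 1 < s -> 2 <= x ->
  0 <= phi s x - phi s (x + 1) <= (s / ln 2 + / (ln 2 * ln 2)) * Rpower x (- (1 + s)).
Proof.
  intros Hs Hx. unfold phi.
  pose proof ln2_pos as L.
  assert (Hlx : ln 2 <= ln x) by (apply ln_le; lra).
  assert (Hly : ln x <= ln (x + 1)) by (apply ln_le; lra).
  assert (Hd : ln (x + 1) - ln x <= / x).
  { replace (x + 1) with (x * (1 + / x)) by (field; lra).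
    rewrite ln_mult by (try lra; assert (0 < / x) by (apply Rinv_0_lt_compat; lra); lra).
    pose proof (ln1p_le (/ x) ltac:(apply Rinv_0_lt_compat; lra)). lra. }
  set (p := Rpower x (- s)). set (q := Rpower (x + 1) (- s)).
  set (r := Rpower x (- (1 + s))).
  assert (Hr : r = p * / x).
  { unfold r, p, Rpower. replace (- (1 + s) * ln x) with (- s * ln x + - ln x) by ring.
    rewrite exp_plus, exp_Ropp, exp_ln by lra. reflexivity. }
  pose proof (T1 s x ltac:(lra) ltac:(lra)) as [T1a T1b].
  fold p q r in T1a, T1b.
  pose proof (rpow_pos (x + 1) (- (1 + s))).
  assert (Hpq : 0 <= p - q) by nra.
  assert (Hq : 0 <= q <= p) by (split; [left; apply rpow_pos| lra]).
  set (lx := ln x) in *. set (ly := ln (x + 1)) in *.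
  assert (E : p / lx - q / ly = (p - q) / lx + q * (ly - lx) / (lx * ly)) by (field; lra).
  rewrite E.
  assert (A1 : (p - q) / lx <= s * r / ln 2) by (apply frac_le; lra).
  assert (A2 : q * (ly - lx) / (lx * ly) <= p * / x / (ln 2 * ln 2)).
  { apply frac_le. split. apply Rmult_le_pos; lra.
    apply Rmult_le_compat; lra. split. apply Rmult_lt_0_compat; lra.
    apply Rmult_le_compat; lra. }
  assert (B1 : 0 <= (p - q) / lx) by (apply Rdiv_le_0_compat; lra).
  assert (B2 : 0 <= q * (ly - lx) / (lx * ly)).
  { apply Rdiv_le_0_compat. apply Rmult_le_pos; lra. apply Rmult_lt_0_compat; lra. }
  rewrite <- Hr in A2. split. lra.
  replace ((s / ln 2 + / (ln 2 * ln 2)) * r) with (s * r / ln 2 + r / (ln 2 * ln 2)) by (field; lra).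
  lra.
Qed.

Lemma INR_SS k : 2 <= INR (S (S k)).
Proof. rewrite !S_INR. pose proof (pos_INR k). lra. Qed.

Lemma real_main a :
  (forall v, 1 < v -> exists C, 0 <= C /\ forall x, (1 <= x)%nat -> Rabs (SR a x) <= C * Rpower (INR x) v) ->
  forall s, 1 < s -> ex_series (fun m => a (S m) * Rpower (INR (S m)) (- s)).
Proof.
  intros Hyp s Hs.
  set (w := (1 + s) / 2). set (dl := (s - 1) / 2).
  assert (Hw : 1 < w) by (unfold w; lra). assert (Hdl : 0 < dl) by (unfold dl; lra).
  destruct (Hyp w Hw) as [C [HC HSC]].
  destruct (B_bound a w C Hw HC HSC) as [K [HK HB]].
  assert (HB1 : BB a 1 = 0) by (unfold BB, bb; simpl; rewrite ln_1; ring).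
  pose proof ln2_pos as L2.
  set (c1 := s / ln 2 + / (ln 2 * ln 2)).
  assert (Hc1 : 0 <= c1).
  { unfold c1. assert (0 < / (ln 2 * ln 2)) by (apply Rinv_0_lt_compat; nra).
    assert (0 < s / ln 2) by (apply Rdiv_lt_0_compat; lra). lra. }
  apply ex_series_incr_1.
  set (g := fun k => BB a (S k) * phi s (INR (S k))).
  set (E := fun k => BB a (S k) * (phi s (INR (S k)) - phi s (INR (S (S k))))).
  apply (ex_series_ext (fun k => plus ((-1) * (g k - g (S k))) (E k))).
  { intros k. change (plus ?u ?v) with (u + v). unfold g, E.
    assert (HBS : BB a (S (S k)) = BB a (S k) + a (S (S k)) * ln (INR (S (S k)))) by reflexivity.
    rewrite HBS. unfold phi.
    assert (0 < ln (INR (S (S k)))) by (rewrite <- ln_1; apply ln_increasing; [lra|]; pose proof (INR_SS k); lra).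
    match goal with |- ?x = ?y => change (@eq R x y) end.
    destruct k.
    - rewrite HB1, !Rmult_0_l. field. lra.
    - assert (0 < ln (INR (S (S k)))) by (rewrite <- ln_1; apply ln_increasing; [lra|]; pose proof (INR_SS k); lra).
      field. lra. }
  apply (ex_series_plus (fun k => -1 * (g k - g (S k))) E).
  - apply tele.
    apply (squeeze0 _ (fun k => Rpower (INR (S k)) (- dl)) (K / ln 2)); [|apply lim_rpow; auto].
    intros k. unfold g. destruct k.
    + rewrite HB1, Rmult_0_l, Rabs_R0. apply Rmult_le_pos. apply Rdiv_le_0_compat; lra. left; apply rpow_pos.
    + pose proof (INR_SS k) as Hx. set (x := INR (S (S k))) in *.
      rewrite Rabs_mult. unfold phi.
      assert (Hlx : ln 2 <= ln x) by (apply ln_le; lra).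
      pose proof (rpow_pos x (- s)).
      rewrite (Rabs_pos_eq (Rpower x (- s) / ln x)) by (apply Rdiv_le_0_compat; lra).
      assert (Hb : Rabs (BB a (S (S k))) <= K * Rpower x w) by (apply HB; lia).
      assert (Hp : Rpower x (- s) / ln x <= Rpower x (- s) / ln 2) by (apply frac_le; lra).
      eapply Rle_trans. apply Rmult_le_compat. apply Rabs_pos. apply Rdiv_le_0_compat; lra.
      exact Hb. exact Hp.
      replace (- dl) with (w + - s) by (unfold w, dl; field). rewrite Rpower_plus.
      unfold Rdiv. right. ring.
  - apply ex_series_incr_1.
    apply (@ex_series_le R_AbsRing R_CompleteNormedModule (fun k => E (S k)) (fun k => (K * c1 / dl) * (Rpower (INR (S k)) (- dl) - Rpower (INR (S (S k))) (- dl)))).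
    2:{ apply tele. apply lim_rpow. auto. }
    intros k. change (norm (E (S k))) with (Rabs (E (S k))). unfold E.
    pose proof (INR_SS k) as Hx.
    rewrite (S_INR (S (S k))). set (x := INR (S (S k))) in *.
    pose proof (phi_diff s x Hs Hx) as [D1 D2].
    rewrite Rabs_mult, (Rabs_pos_eq (phi s x - phi s (x + 1))) by lra.
    assert (Hb : Rabs (BB a (S (S k))) <= K * Rpower x w) by (apply HB; lia).
    eapply Rle_trans. apply Rmult_le_compat. apply Rabs_pos. lra. exact Hb. exact D2.
    pose proof (T1 dl (INR (S k)) Hdl ltac:(apply lt_0_INR; lia)) as [T _].
    replace (INR (S k) + 1) with x in T by (unfold x; rewrite (S_INR (S k)); ring).
    assert (EE : K * Rpower x w * (c1 * Rpower x (- (1 + s))) = K * c1 * Rpower x (- (1 + dl))).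
    { replace (- (1 + dl)) with (w + - (1 + s)) by (unfold w, dl; field). rewrite Rpower_plus. ring. }
    fold c1. rewrite EE.
    apply Rmult_le_compat_l with (r := K * c1 / dl) in T; [|apply Rdiv_le_0_compat; [apply Rmult_le_pos|]; lra].
    replace (K * c1 / dl * (dl * Rpower x (- (1 + dl)))) with (K * c1 * Rpower x (- (1 + dl))) in T by (field; lra).
    exact T.
Qed.

Lemma Re_sum (u : nat -> C) n : Re (sum_n_m u 1 n) = sm (fun k => Re (u k)) n.
Proof.
  induction n.
  - rewrite sum_n_m_zero by lia. reflexivity.
  - rewrite sum_n_Sm by lia. simpl sm. rewrite <- IHn. reflexivity.
Qed.

Lemma Im_sum (u : nat -> C) n : Im (sum_n_m u 1 n) = sm (fun k => Im (u k)) n.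
Proof.
  induction n.
  - rewrite sum_n_m_zero by lia. reflexivity.
  - rewrite sum_n_Sm by lia. simpl sm. rewrite <- IHn. reflexivity.
Qed.

Lemma Re_Ssum a n : Re (Ssum a n) = SR (fun k => Re (a k)) n.
Proof.
  unfold Ssum, SR. rewrite Re_sum. apply sm_ext. intros k _.
  destruct (a k) as [p q]. unfold Cmult, RtoC, Re. simpl. ring.
Qed.

Lemma Im_Ssum a n : Im (Ssum a n) = SR (fun k => Im (a k)) n.
Proof.
  unfold Ssum, SR. rewrite Im_sum. apply sm_ext. intros k _.
  destruct (a k) as [p q]. unfold Cmult, RtoC, Im. simpl. ring.
Qed.

Lemma finite_bound (u : nat -> R) N : exists C0, 0 <= C0 /\ forall n, (n < N)%nat -> u n <= C0.
Proof.
  induction N.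
  - exists 0. split. lra. intros; lia.
  - destruct IHN as [C0 [H0 H1]]. exists (Rmax C0 (u N)). split.
    + eapply Rle_trans; [exact H0| apply Rmax_l].
    + intros n Hn. destruct (Nat.eq_dec n N) as [->|Hne]. apply Rmax_r.
      eapply Rle_trans; [apply H1; lia| apply Rmax_l].
Qed.

Lemma hyp_transfer a v : 1 < v ->
  is_lim_seq (fun k : nat => Cmod (Ssum a k) / Rpower (INR k) v) 0 ->
  exists C, 0 <= C /\ forall x, (1 <= x)%nat -> Cmod (Ssum a x) <= C * Rpower (INR x) v.
Proof.
  intros Hv H. apply is_lim_seq_spec in H.
  destruct (H (mkposreal 1 Rlt_0_1)) as [N HN]. simpl in HN.
  destruct (finite_bound (fun n => Cmod (Ssum a n)) N) as [C0 [H0 H1]].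
  exists (C0 + 1). split. lra. intros x Hx.
  assert (Hx1 : 1 <= INR x) by (apply (le_INR 1); auto).
  assert (Hp : 1 <= Rpower (INR x) v).
  { replace 1 with (Rpower 1 v) at 1 by (unfold Rpower; rewrite ln_1, Rmult_0_r; apply exp_0).
    apply rpow_mono_pos; lra. }
  pose proof (Cmod_ge_0 (Ssum a x)).
  destruct (Nat.lt_ge_cases x N).
  - specialize (H1 x H3). simpl in H1. nra.
  - specialize (HN x H3). rewrite Rminus_0_r in HN.
    rewrite Rabs_pos_eq in HN by (apply Rdiv_le_0_compat; lra).
    apply Rmult_lt_compat_r with (r := Rpower (INR x) v) in HN; [|lra].
    unfold Rdiv in HN. rewrite Rmult_assoc, Rinv_l, Rmult_1_r in HN by lra. nra.
Qed.

Lemma pair_series (x y : nat -> R) : ex_series x -> ex_series y ->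
  ex_series (fun n => (x n, y n) : C).
Proof.
  intros [lx Hx] [ly Hy]. exists (lx, ly).
  assert (Hs : forall N, sum_n (fun n => (x n, y n) : C) N = (sum_n x N, sum_n y N)).
  { induction N. rewrite !sum_O. reflexivity. rewrite !sum_Sn, IHN. reflexivity. }
  unfold is_series in *. intros P [eps HP].
  destruct (Hx (ball lx eps) (locally_ball lx eps)) as [N1 H1].
  destruct (Hy (ball ly eps) (locally_ball ly eps)) as [N2 H2].
  exists (Nat.max N1 N2). intros n Hn. simpl. rewrite Hs. apply HP.
  split; [apply H1|apply H2]; lia.
Qed.

Theorem lemma2 (a : nat -> C) :
  (forall v : R, 1 < v ->
     is_lim_seq (fun k : nat => Cmod (Ssum a k) / Rpower (INR k) v) 0) ->
  forall v : R, 1 < v ->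
    ex_series (fun m : nat => Cmult (a (S m)) (RtoC (Rpower (INR (S m)) (- v)))).
Proof.
  intros H v Hv.
  assert (HRe := real_main (fun k => Re (a k))).
  assert (HIm := real_main (fun k => Im (a k))).
  assert (Hx : ex_series (fun m => Re (a (S m)) * Rpower (INR (S m)) (- v))).
  { apply HRe; auto. intros w Hw. destruct (hyp_transfer a w Hw (H w Hw)) as [C [HC HCb]].
    exists C. split; auto. intros x Hx1. rewrite <- Re_Ssum.
    eapply Rle_trans; [apply re_le_Cmod| apply HCb; auto]. }
  assert (Hy : ex_series (fun m => Im (a (S m)) * Rpower (INR (S m)) (- v))).
  { apply HIm; auto. intros w Hw. destruct (hyp_transfer a w Hw (H w Hw)) as [C [HC HCb]].
    exists C. split; auto. intros x Hx1. rewrite <- Im_Ssum.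
    eapply Rle_trans; [|apply HCb; auto].
    eapply Rle_trans; [|apply Rmax_Cmod]. apply Rmax_r. }
  eapply ex_series_ext; [|exact (pair_series _ _ Hx Hy)].
  intros n. simpl. destruct (a (S n)) as [p q]. unfold Cmult, RtoC. simpl.
  f_equal; ring.
Qed.
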